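(* Let $G$ be a group with a split $BN$-pair $(H,U,N)$ whose Weyl group is $W=N/H=\{1,s_1\}$. Let $n_1\in N$ with $s_1=n_1H$, let $U^-:=U^{n_1}$, $(U^-)^*:=U^-\setminus\{1\}$, and \[ \widetilde H:=\{h\in H:\ \exists\, u^-\in (U^-)^*\text{ with } Uu^-U=Un_1hU\}. \] Then the following are equivalent: (a) $(U^-)^*\cap Un_1hU\neq\emptyset$ for all $h\in H$ (equivalently, $\widetilde H=H$); (b) $U(U^-)^*U=Un_1HU$; (c) $G=(UU^-)^2=UU^-UU^-$.
   Context: A split $BN$-pair $(H,U,N)$ for $G$ means $B=H\ltimes U$ and $N$ satisfy the axioms of split $BN$-pairs (as in Carter, Finite Groups of Lie Type, \S 2.5) with $H=B\cap N$. Here $s_1$ is the longest element of $W$, so $U^{-}=U^{n_1}$ is the opposite unipotent subgroup. Products of subsets are setwise. *)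

(* Defs.v *)
(* Abstract (possibly infinite) groups, subsets, setwise products and
   split BN-pairs in the sense of Carter, Finite Groups of Lie Type, 2.5. *)
Set Implicit Arguments.
Unset Strict Implicit.

Record group := Group {
  gcar :> Type;
  gmul : gcar -> gcar -> gcar;
  g1 : gcar;
  ginv : gcar -> gcar;
  gmulA : forall x y z, gmul x (gmul y z) = gmul (gmul x y) z;
  gmul1 : forall x, gmul g1 x = x;
  gmulV : forall x, gmul (ginv x) x = g1
}.

Arguments gmul {g}.
Arguments g1 {g}.
Arguments ginv {g}.

Definition gset (G : group) := G -> Prop.

Section Sets.
Variable G : group.

Definition set1 (x : G) : gset G := fun y => y = x.
Definition setU (A B : gset G) : gset G := fun x => A x \/ B x.
Definition setI (A B : gset G) : gset G := fun x => A x /\ B x.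
Definition setD1 (A : gset G) : gset G := fun x => A x /\ x <> g1.
Definition setmul (A B : gset G) : gset G :=
  fun x => exists a b, A a /\ B b /\ x = gmul a b.
Definition subset (A B : gset G) : Prop := forall x, A x -> B x.
Definition seteq (A B : gset G) : Prop := forall x, A x <-> B x.
(* conjugate A^g = g^-1 A g *)
Definition conjs (A : gset G) (g : G) : gset G :=
  fun x => A (gmul g (gmul x (ginv g))).

Definition is_subgroup (A : gset G) : Prop :=
  A g1 /\ (forall x y, A x -> A y -> A (gmul x y)) /\
  (forall x, A x -> A (ginv x)).

Definition normal (A B : gset G) : Prop :=
  is_subgroup A /\ subset A B /\
  (forall b a, B b -> A a -> A (gmul (ginv b) (gmul a b))).

Definition generated (A : gset G) : gset G :=
  fun x => forall K, is_subgroup K -> subset A K -> K x.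

(* Split BN-pair (H,U,N) for G, with B = U H and a set S of representatives
   in N of the distinguished generating involutions of W = N/H. *)
Definition split_BN_pair (B N H U S : gset G) : Prop :=
  is_subgroup B /\ is_subgroup N /\
  (forall g, generated (setU B N) g) /\
  seteq H (setI B N) /\ normal H N /\
  (* (iii) W = N/H is generated by the involutions sH, s in S *)
  (forall s, S s -> N s /\ ~ H s /\ H (gmul s s)) /\
  (forall n, N n -> generated (setU H S) n) /\
  (forall s, S s -> ~ seteq (conjs B (ginv s)) B) /\
  (forall n s, N n -> S s ->
     subset (setmul (setmul (set1 n) B) (set1 s))
            (setU (setmul (setmul B (set1 n)) B)
                  (setmul (setmul B (set1 (gmul n s))) B))) /\
  normal U B /\ seteq B (setmul U H) /\
  (forall x, U x -> H x -> x = g1) /\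
  seteq (fun x => forall n, N n -> B (gmul (ginv n) (gmul x n))) H.

End Sets.

(* Main.v *)
Require Import Defs.
From Stdlib Require Import ssreflect Classical.

Set Implicit Arguments.
Unset Strict Implicit.
Local Notation "x ** y" := (gmul x y) (at level 40, left associativity).

Lemma mulgV (G : group) (x : G) : x ** ginv x = g1.
Proof.
have yy : (x ** ginv x) ** (x ** ginv x) = x ** ginv x.
  by rewrite -gmulA (gmulA (ginv x) x) gmulV gmul1.
rewrite -(gmulV (x ** ginv x)).
by rewrite -{3}yy gmulA gmulV gmul1.
Qed.

Lemma mulg1 (G : group) (x : G) : x ** g1 = x.
Proof. by rewrite -(gmulV x) gmulA mulgV gmul1. Qed.

Lemma invK (G : group) (x : G) : ginv (ginv x) = x.
Proof. by rewrite -[LHS]mulg1 -(gmulV x) gmulA gmulV gmul1. Qed.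

Lemma mulKg (G : group) (x y : G) : ginv x ** (x ** y) = y.
Proof. by rewrite gmulA gmulV gmul1. Qed.

Lemma mulVKg (G : group) (x y : G) : x ** (ginv x ** y) = y.
Proof. by rewrite gmulA mulgV gmul1. Qed.

Lemma inv1 (G : group) : ginv (@g1 G) = g1.
Proof. by rewrite -[LHS]mulg1 gmulV. Qed.

Lemma invM (G : group) (x y : G) : ginv (x ** y) = ginv y ** ginv x.
Proof.
have e : (x ** y) ** (ginv y ** ginv x) = g1 by rewrite -gmulA mulVKg mulgV.
by rewrite -[LHS]mulg1 -e gmulA gmulV gmul1.
Qed.

Ltac gnorm := repeat progress rewrite ?invM ?invK ?inv1 -?gmulA ?mulKg ?mulVKg ?gmulV ?mulgV ?mulg1 ?gmul1.


Lemma transport (T : Type) (P : T -> Prop) x y : P x -> x = y -> P y.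
Proof. by move=> p <-. Qed.

Definition C (G : group) (U : gset G) (x : G) : gset G :=
  fun g => exists a b, U a /\ U b /\ g = a ** (x ** b).
Arguments C {G}.

Lemma Lconv1 (G : group) (U : gset G) (x g : G) :
  setmul (setmul U (set1 x)) U g <-> C U x g.
Proof.
split.
- move=> [p [b [[a [y [Ua [ey ep]]]] [Ub ->]]]].
  exists a, b; split=>//; split=>//. rewrite ep ey; by gnorm.
- move=> [a [b [Ua [Ub ->]]]]. exists (a ** x), b; split; last split=>//.
  + exists a, x; split=>//; split=>//.
  + by gnorm.
Qed.

Lemma Lconv2 (G : group) (U H : gset G) (n1 g : G) :
  setmul (setmul U (setmul (set1 n1) H)) U g <-> exists h, H h /\ C U (n1 ** h) g.
Proof.
split.
- move=> [p [b [[a [y [Ua [[z [h [ez [Hh ey]]]] ep]]]] [Ub ->]]]].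
  exists h; split=>//. exists a, b; split=>//; split=>//. rewrite ep ey ez; by gnorm.
- move=> [h [Hh [a [b [Ua [Ub ->]]]]]]. exists (a ** (n1 ** h)), b; split; last split=>//.
  + exists a, (n1 ** h); split=>//; split=>//. exists n1, h; split=>//.
  + by gnorm.
Qed.

Lemma Lconv3 (G : group) (U Y : gset G) (g : G) :
  setmul (setmul U Y) U g <-> exists v, Y v /\ C U v g.
Proof.
split.
- move=> [p [b [[a [v [Ua [Yv ep]]]] [Ub ->]]]].
  exists v; split=>//. exists a, b; split=>//; split=>//. rewrite ep; by gnorm.
- move=> [v [Yv [a [b [Ua [Ub ->]]]]]]. exists (a ** v), b; split; last split=>//.
  + exists a, v; split=>//.
  + by gnorm.
Qed.

Lemma Lconv4 (G : group) (U Y : gset G) (g : G) :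
  setmul (setmul (setmul U Y) U) Y g <->
  exists u1 v1 u2 v2, U u1 /\ Y v1 /\ U u2 /\ Y v2 /\ g = u1 ** v1 ** u2 ** v2.
Proof.
split.
- move=> [p [v2 [[q [u2 [[u1 [v1 [Uu1 [Yv1 eq]]]] [Uu2 ep]]]] [Yv2 ->]]]].
  exists u1, v1, u2, v2. do 4 (split=>//). by rewrite ep eq.
- move=> [u1 [v1 [u2 [v2 [Uu1 [Yv1 [Uu2 [Yv2 ->]]]]]]]].
  exists (u1 ** v1 ** u2), v2; split; last split=>//.
  exists (u1 ** v1), u2; split; last by split.
  exists u1, v1; split=>//.
Qed.

Theorem lemma5 (G : group) (B N H U S : gset G) (n1 : G) :
  split_BN_pair B N H U S ->
  (* W = N/H = {1, s1} with s1 = n1 H, s1 <> 1 *)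
  N n1 -> ~ H n1 ->
  (forall n, N n -> H n \/ exists h, H h /\ n = gmul n1 h) ->
  let Um := conjs U n1 in
  let Ums := setD1 Um in
  ((forall h, H h -> exists v, Ums v /\
        setmul (setmul U (set1 (gmul n1 h))) U v)
   <-> seteq (setmul (setmul U Ums) U)
             (setmul (setmul U (setmul (set1 n1) H)) U)) /\
  (seteq (setmul (setmul U Ums) U)
         (setmul (setmul U (setmul (set1 n1) H)) U)
   <-> (forall g, setmul (setmul (setmul U Um) U) Um g)).
Proof.
move=> HBN HN1 HnH Hdich; cbv zeta.
case: HBN => [[HB1 [HBm HBi]] [[HN1' [HNm HNi]] [Hgen [HHeq [[[HH1 [HHm HHi]] [HHN HHnorm]] [HS [HSgen [_ [Hv [[[HU1 [HUm HUi]] [HUB HUnorm]] [HBUH [HUH Hcap]]]]]]]]]]]].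
have HsubB : forall x, H x -> B x by move=> x hx; case: (proj1 (HHeq x) hx).
have Bn1 : ~ B n1 by move=> b; apply: (HnH); apply (HHeq n1); split.
have Ht : H (n1 ** n1).
{
  case: (Hdich (n1 ** n1) (HNm _ _ HN1 HN1)) => [//|[h [Hh e]]].
  exfalso; apply: (HnH). have -> : n1 = h by rewrite -(mulKg n1 n1) e mulKg. done.
}
have Hn1c : forall h, H h -> H (ginv n1 ** (h ** n1)) by move=> h hh; exact: (HHnorm).
have Hn1c' : forall h, H h -> H (n1 ** (h ** ginv n1)).
{
  move=> h hh; have := HHnorm (ginv n1) h (HNi _ HN1) hh; by rewrite invK.
}
have HUc' : forall h u, B h -> U u -> U (h ** (u ** ginv h)).
{
  move=> h u bh uu; have := HUnorm (ginv h) u (HBi _ bh) uu; by rewrite invK.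
}
have Bdec : forall x, B x -> exists u h, U u /\ H h /\ x = u ** h.
{
  move=> x bx; case: (proj1 (HBUH x) bx) => [u [h [? [? ->]]]]; by exists u, h.
}
have F1 : forall h g, H h -> C U (n1 ** h) g -> ~ B g.
{
  move=> h g Hh [a [b [Ua [Ub ->]]]] Bg. apply: (Bn1).
  apply: (transport (HBm _ _ (HBi _ (HUB _ Ua)) (HBm _ _ Bg (HBm _ _ (HBi _ (HUB _ Ub)) (HBi _ (HsubB _ Hh)))))).
  by gnorm.
}
have CBl : forall x y h, B x -> H h -> C U (n1 ** h) y ->
    exists h', H h' /\ C U (n1 ** h') (x ** y).
{
  move=> x y h Bx Hh [a [b [Ua [Ub ->]]]].
  case: (Bdec x Bx) => [u0 [h0 [Uu0 [Hh0 ->]]]].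
  exists (ginv n1 ** (h0 ** n1) ** h); split; first exact: (HHm) (Hn1c _ Hh0) Hh.
  exists (u0 ** (h0 ** (a ** ginv h0))), b; split; last split=>//.
  - exact: (HUm) Uu0 (HUc' h0 a (HsubB _ Hh0) Ua).
  - by gnorm.
}
have CBr : forall x y h, B x -> H h -> C U (n1 ** h) y ->
    exists h', H h' /\ C U (n1 ** h') (y ** x).
{
  move=> x y h Bx Hh [a [b [Ua [Ub ->]]]].
  case: (Bdec x Bx) => [u0 [h0 [Uu0 [Hh0 ->]]]].
  exists (h ** h0); split; first exact: (HHm) Hh Hh0.
  exists a, (ginv h0 ** ((b ** u0) ** h0)); split=>//; split.
  - exact: (HUnorm) (HsubB _ Hh0) (HUm _ _ Ub Uu0).
  - by gnorm.
}
pose K := fun g => B g \/ exists h, H h /\ C U (n1 ** h) g.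
have KBl : forall x y, B x -> K y -> K (x ** y).
{
  move=> x y Bx [By|[h [Hh Cy]]]; first by left; apply: (HBm).
  by right; apply: (CBl) Cy.
}
have KBr : forall x y, K y -> B x -> K (y ** x).
{
  move=> x y [By|[h [Hh Cy]]] Bx; first by left; apply: (HBm).
  by right; apply: (CBr) Cy.
}
have Kn1 : K n1.
{
  right; exists g1; split=>//; exists g1, g1; do 2 (split=>//); by gnorm.
}
have Kn1i : K (ginv n1).
{
  right; exists (ginv (n1 ** n1)); split; first exact: (HHi).
  exists g1, g1; do 2 (split=>//); by gnorm.
}
have M : forall b, B b -> K (n1 ** (b ** n1)).
{
  move=> b Bb.
  have [s Ss] : exists s, S s.
    apply: (NNPP) => ns. apply: (HnH). apply: (HSgen n1 HN1 H);
      [ by split=>//; split | move=> x [Hx|Sx]=>//; exfalso; apply: (ns); by exists x ].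
  case: (HS s Ss) => [Ns [nHs _]].
  case: (Hdich s Ns) => [//|[hs [Hhs es]]].
  have Hn1s : H (n1 ** s).
    case: (Hdich _ (HNm _ _ HN1 Ns)) => [//| [h [Hh e]]].
    exfalso; apply: (nHs). have -> : s = h by rewrite -(mulKg n1 s) e mulKg. done.
  have mem : setmul (setmul (set1 n1) B) (set1 s) (n1 ** b ** s).
    exists (n1 ** b), s; split; last split=>//. exists n1, b; split=>//.
  have -> : n1 ** (b ** n1) = (n1 ** b ** s) ** ginv hs by rewrite es; gnorm.
  case: (Hv n1 s HN1 Ss _ mem) =>
    [[p [b2 [[b1 [y [Bb1 [ey ep]]]] [Bb2 e]]]] | [p [b2 [[b1 [y [Bb1 [ey ep]]]] [Bb2 e]]]]];
    rewrite e ep ey.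
  - apply: (transport (KBl _ _ Bb1 (KBr _ _ Kn1 (HBm _ _ Bb2 (HBi _ (HsubB _ Hhs)))))).
    by gnorm.
  - left. apply: (HBm); last exact: (HBi _ (HsubB _ Hhs)).
    apply: (HBm)=>//. exact: (HBm) Bb1 (HsubB _ Hn1s).
}
have Ksub : is_subgroup K.
{
  split; first by left.
  split.
  - move=> x y [Bx|[h [Hh [a [b [Ua [Ub ->]]]]]]] Ky; first exact: (KBl).
    case: Ky => [By|[h' [Hh' [a' [b' [Ua' [Ub' ->]]]]]]].
      by apply: (KBr)=>//; right; exists h; split=>//; exists a, b.
    apply: (transport (KBl _ _ (HUB _ Ua) (KBr _ _ (M (h ** b ** a') _) (HBm _ _ (HsubB _ Hh') (HUB _ Ub'))))).
      2: by gnorm.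
    apply: (HBm); last exact: (HUB). apply: (HBm); [exact: (HsubB) | exact: HUB].
  - move=> x [Bx|[h [Hh [a [b [Ua [Ub ->]]]]]]]; first by left; apply: (HBi).
    apply: (transport (KBl _ _ (HBm _ _ (HBi _ (HUB _ Ub)) (HBi _ (HsubB _ Hh))) (KBr _ _ Kn1i (HBi _ (HUB _ Ua))))).
    by gnorm.
}
have F4 : forall g, K g.
{
  move=> g; apply: (Hgen g K Ksub) => x [Bx|Nx]; first by left.
  case: (Hdich x Nx) => [Hx|[h [Hh ->]]]; first by left; apply: (HsubB).
  right; exists h; split=>//; exists g1, g1; do 2 (split=>//); by gnorm.
}
have F2 : forall v, U (n1 ** (v ** ginv n1)) -> B v -> v = g1.
{
  move=> v Uc Bv.
  have Hv' : H v.
    apply: (proj1 (Hcap v)) => n Nn.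
    case: (Hdich n Nn) => [Hn | [h [Hh ->]]].
      exact: (HBm) (HBi _ (HsubB _ Hn)) (HBm _ _ Bv (HsubB _ Hn)).
    apply: (transport (HBm _ _ (HBi _ (HsubB _ Hh)) (HBm _ _ (HBm _ _ (HBi _ (HsubB _ Ht)) (HBm _ _ (HUB _ Uc) (HsubB _ Ht))) (HsubB _ Hh)))).
    by gnorm.
  have e := HUH _ Uc (Hn1c' _ Hv').
  have : v = ginv n1 ** ((n1 ** (v ** ginv n1)) ** n1) by gnorm.
  rewrite e => ->; by gnorm.
}
have Ab : (forall h, H h -> exists v, setD1 (conjs U n1) v /\
        setmul (setmul U (set1 (n1 ** h))) U v) ->
    seteq (setmul (setmul U (setD1 (conjs U n1))) U)
             (setmul (setmul U (setmul (set1 n1) H)) U).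
{
  move=> Ha x; split.
  - move/Lconv3 => [v [[Uv nv] [a [b [Ua [Ub ->]]]]]]. apply/Lconv2.
    case: (F4 v) => [Bv | [h [Hh [a' [b' [Ua' [Ub' ev]]]]]]].
      by case: nv; apply: (F2).
    exists h; split=>//. exists (a ** a'), (b' ** b). split; first exact: (HUm).
    split; first exact: (HUm). rewrite ev; by gnorm.
  - move/Lconv2 => [h [Hh [a [b [Ua [Ub ->]]]]]].
    case: (Ha h Hh) => [v [Vs /Lconv1 [a' [b' [Ua' [Ub' ev]]]]]].
    apply/Lconv3. exists v; split=>//. exists (a ** ginv a'), (ginv b' ** b).
    split; first by apply: (HUm)=>//; apply: (HUi).
    split; first by apply: (HUm)=>//; apply: (HUi).
    rewrite ev; by gnorm.
}
have Ba : seteq (setmul (setmul U (setD1 (conjs U n1))) U)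
             (setmul (setmul U (setmul (set1 n1) H)) U) ->
    (forall h, H h -> exists v, setD1 (conjs U n1) v /\
        setmul (setmul U (set1 (n1 ** h))) U v).
{
  move=> Hb h Hh.
  have : setmul (setmul U (setmul (set1 n1) H)) U (n1 ** h).
    apply/Lconv2; exists h; split=>//; exists g1, g1; do 2 (split=>//); by gnorm.
  move/(proj2 (Hb _))/Lconv3 => [v [Vs [a [b [Ua [Ub e]]]]]].
  exists v; split=>//. apply/Lconv1. exists (ginv a), (ginv b).
  split; first exact: (HUi). split; first exact: (HUi). rewrite e; by gnorm.
}
have Cc : seteq (setmul (setmul U (setD1 (conjs U n1))) U)
             (setmul (setmul U (setmul (set1 n1) H)) U) ->
    (forall g, setmul (setmul (setmul U (conjs U n1)) U) (conjs U n1) g).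
{
  move=> Hb g. apply/Lconv4.
  have : setmul (setmul U (setmul (set1 n1) H)) U n1.
    apply/Lconv2; exists g1; split=>//; exists g1, g1; do 2 (split=>//); by gnorm.
  move/(proj2 (Hb _))/Lconv3 => [w [[Uw nw] _]].
  case: (F4 g) => [Bg | [k [Hk Cg]]].
  - case: (Bdec g Bg) => [u [h [Uu [Hh ->]]]].
    case: (F4 w) => [Bw | [k [Hk Cw]]]; first by case: nw; apply: (F2).
    case: (CBl h w k (HsubB _ Hh) Hk Cw) => [k' [Hk' Chw]].
    have : setmul (setmul U (setD1 (conjs U n1))) U (h ** w).
      by apply: (proj2 (Hb _)); apply/Lconv2; exists k'.
    move/Lconv3 => [v [[Uv nv] [a [b [Ua [Ub e]]]]]].
    exists (u ** a), v, b, (ginv w). split; first exact: (HUm).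
    split=>//. split=>//. split.
      apply: (transport (HUi _ Uw)); by gnorm.
    have -> : h = h ** w ** ginv w by gnorm.
    rewrite e; by gnorm.
  - have : setmul (setmul U (setD1 (conjs U n1))) U g.
      by apply: (proj2 (Hb _)); apply/Lconv2; exists k.
    move/Lconv3 => [v [[Uv nv] [a [b [Ua [Ub e]]]]]].
    exists a, v, b, g1. split=>//. split=>//. split=>//. split.
      apply: (transport HU1); by gnorm.
    rewrite e; by gnorm.
}
have Dd : (forall g, setmul (setmul (setmul U (conjs U n1)) U) (conjs U n1) g) ->
    (forall h, H h -> exists v, setD1 (conjs U n1) v /\
        setmul (setmul U (set1 (n1 ** h))) U v).
{
  move=> Hc h Hh.
  case/Lconv4: (Hc (n1 ** h)) => [u1 [v1 [u2 [v2 [Uu1 [Uv1 [Uu2 [Uv2 e]]]]]]]].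
  have Cv : C U (n1 ** h) v1.
    exists (ginv u1 ** ((n1 ** (h ** ginv n1)) ** ((ginv (n1 ** (v2 ** ginv n1))) ** ginv (n1 ** (h ** ginv n1))))), (ginv u2).
    split.
      apply: (HUm); first exact: (HUi).
      apply: (HUc'); first exact: (HsubB _ (Hn1c' _ Hh)).
      exact: (HUi).
    split; first exact: (HUi).
    have -> : v1 = ginv u1 ** (n1 ** h) ** ginv v2 ** ginv u2 by rewrite e; gnorm.
    by gnorm.
  exists v1; split.
    split=>// e1. apply: (F1 h v1 Hh Cv). rewrite e1; exact: (HB1).
  by apply/Lconv1.
}
split; first by split; [exact: (Ab) | exact: Ba].
split; first exact: (Cc).
by move=> Hc; apply: (Ab); apply: (Dd).
Qed.
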